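(* Let $1\le k<n$ (or $k\le n$), $\mathcal X=\mathbb C^n$, and let $v_1>v_2>\dots>v_k>0$ and $v_{k+1}=0$. Let $\mathcal R$ be the set of $k$-tuples $(x_1,\dots,x_k)$ of orthonormal vectors in $\mathcal X$. Define the quantum score $S=(s,\mu)$ on reports $\mathcal R$ with outcomes $\{1,\dots,k+1\}$ by $\mu((x_1,\dots,x_k))=\{x_1x_1^*,\dots,x_kx_k^*,\,I-\sum_{i=1}^kx_ix_i^*\}$ and $s((x_1,\dots,x_k),y)=v_y$. Then for every $\rho\in\mathrm{Dens}(\mathcal X)$, $S((x_1,\dots,x_k);\rho)=\langle\sum_{i=1}^kv_ix_ix_i^*,\rho\rangle$, and the set of maximizers $\arg\max_{r\in\mathcal R}S(r;\rho)$ equals the set of orthonormal tuples $(x_1,\dots,x_k)$ such that $\rho x_i=\lambda_i(\rho)x_i$ for each $i=1,\dots,k$. In particular, $S$ elicits the set-valued property $\Gamma_{1..k}$.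
   Context: $\langle X,Y\rangle=\mathrm{Tr}(X^*Y)$; $\mathrm{Dens}(\mathcal X)$ the density matrices; $\lambda_i(\rho)$ the $i$-th largest eigenvalue of $\rho$. For a quantum score on a report set $\mathcal R$, $S=(s,\mu)$ with $\mu(r)$ a measurement (positive semidefinite operators summing to $I$) and expected score $S(r;\rho)=\sum_y\langle\mu(r)_y,\rho\rangle s(r,y)$. A set-valued property $\Gamma:\mathrm{Dens}(\mathcal X)\to 2^{\mathcal R}$ is elicited by $S$ if $\Gamma(\rho)=\arg\max_{r\in\mathcal R}S(r;\rho)$ for every $\rho$. $\Gamma_{1..k}(\rho)$ is the set of orthonormal $k$-tuples $(x_1,\dots,x_k)$ where $x_i$ is an eigenvector of $\rho$ with eigenvalue $\lambda_i(\rho)$. *)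

(* Defs.v *)
(* C : numClosedFieldType (e.g. the complex numbers). *)
From HB Require Import structures.
From mathcomp Require Import all_boot all_order all_algebra.
Set Implicit Arguments. Unset Strict Implicit. Unset Printing Implicit Defensive.
Import Order.TTheory GRing.Theory Num.Theory.
Local Open Scope ring_scope.
Local Open Scope sesquilinear_scope.

Section QDefs.
Variables (C : numClosedFieldType) (n : nat).

Definition hs_dot (X Y : 'M[C]_n) : C := \tr (X ^t* *m Y).

Definition hermitian (A : 'M[C]_n) : Prop := A ^t* = A.

Definition psd (A : 'M[C]_n) : Prop :=
  hermitian A /\ forall v : 'cV[C]_n, 0 <= (v ^t* *m A *m v) 0 0.

Definition density (rho : 'M[C]_n) : Prop := psd rho /\ \tr rho = 1.

(* eigenvalues (with multiplicity) sorted in non-increasing order;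
   lambda_ i rho is the (i+1)-th largest eigenvalue (0-indexed) *)
Definition eigs_sorted (A : 'M[C]_n) : seq C :=
  sort (fun a b => b <= a) [seq spectral_diag A 0 j | j : 'I_n].
Definition lambda_ (i : nat) (A : 'M[C]_n) : C := nth 0 (eigs_sorted A) i.

Definition outer (x : 'cV[C]_n) : 'M[C]_n := x *m x ^t*.

Definition is_measurement (Y : finType) (mu : Y -> 'M[C]_n) : Prop :=
  (forall y, psd (mu y)) /\ \sum_(y : Y) mu y = 1%:M.

Record qscore (Rep : Type) (Y : finType) := QScore {
  qs_s : Rep -> Y -> C;
  qs_mu : Rep -> Y -> 'M[C]_n }.

Definition exp_score (Rep : Type) (Y : finType) (S : qscore Rep Y)
  (r : Rep) (rho : 'M[C]_n) : C :=
  \sum_(y : Y) hs_dot (qs_mu S r y) rho * qs_s S r y.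

Definition is_argmax (Rep : Type) (Rset : Rep -> Prop) (f : Rep -> C) (r : Rep) :=
  Rset r /\ forall r', Rset r' -> f r' <= f r.

Definition elicits (Rep : Type) (Y : finType) (Rset : Rep -> Prop)
  (S : qscore Rep Y) (Gamma : 'M[C]_n -> Rep -> Prop) : Prop :=
  forall rho, density rho ->
    forall r, Gamma rho r <-> is_argmax Rset (fun r' => exp_score S r' rho) r.

Definition orthonormal_tuple (k : nat) (x : 'I_k -> 'cV[C]_n) : Prop :=
  forall i j, (x i) ^t* *m x j = (i == j)%:R%:M.

Definition Gamma_top (k : nat) (rho : 'M[C]_n) (x : 'I_k -> 'cV[C]_n) : Prop :=
  orthonormal_tuple x /\ forall i : 'I_k, rho *m x i = lambda_ i rho *: x i.

(* the score of the theorem: outcomes 'I_k.+1 (outcome ord_max = "k+1") *)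
Definition topk_mu (k : nat) (x : 'I_k -> 'cV[C]_n) (y : 'I_k.+1) : 'M[C]_n :=
  match unlift ord_max y with
  | Some j => outer (x j)
  | None => 1%:M - \sum_(i < k) outer (x i)
  end.

Definition topk_score (k : nat) (v : 'I_k.+1 -> C) : qscore ('I_k -> 'cV[C]_n) 'I_k.+1 :=
  QScore (fun _ y => v y) (@topk_mu k).

End QDefs.

(* Main.v *)
Require Import Defs.
From HB Require Import structures.
From mathcomp Require Import all_boot all_order all_algebra.
From mathcomp Require Import ring.
Import Order.TTheory GRing.Theory Num.Theory.
Local Open Scope ring_scope.
Local Open Scope sesquilinear_scope.

Section Core.
Variable C : numClosedFieldType.
Variables (k n : nat) (hkn : (k <= n)%N) (V L : nat -> C) (w : nat -> nat -> C).
Hypothesis HV : forall {i}, (i < k)%N -> V i.+1 < V i.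
Hypothesis HVk : V k = 0.
Hypothesis HLr : forall {j}, (j < n)%N -> L j \is Num.real.
Hypothesis HLs : forall {j1 j2}, (j1 <= j2)%N -> (j2 < n)%N -> L j2 <= L j1.
Hypothesis Hw0 : forall i j, 0 <= w i j.
Hypothesis Hrow : forall {i}, (i < k)%N -> \sum_(j < n) w i j = 1.
Hypothesis Hcol : forall {j}, (j < n)%N -> \sum_(i < k) w i j <= 1.

Let a i := \sum_(j < n) L j * w i j.
Let A m := \sum_(i < m) a i.
Let D m := \sum_(i < m) L i.
Let W m j := \sum_(i < m) w i j.

Lemma sum_ind (F : nat -> C) m p : (m <= p)%N ->
  \sum_(j < p) F j * (j < m)%:R = \sum_(j < m) F j.
Proof.
move=> hmp; rewrite (big_ord_widen _ _ hmp) [RHS]big_mkcond /=.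
by apply: eq_bigr => j _; case: ifP => _; rewrite ?mulr1 ?mulr0.
Qed.

Lemma W_ge0 m j : 0 <= W m j.
Proof. by apply: sumr_ge0 => i _. Qed.

Lemma W_mono m m' j : (m <= m')%N -> W m j <= W m' j.
Proof.
move=> h; rewrite /W (big_ord_widen _ (fun i => w i j) h).
rewrite [X in _ <= X](bigID (fun i : 'I_m' => (i < m)%N)) /= lerDl; apply: sumr_ge0 => i _; apply: Hw0.
Qed.

Lemma W_le1 m j : (m <= k)%N -> (j < n)%N -> W m j <= 1.
Proof. move=> h hj; apply: le_trans (Hcol hj); exact: (@W_mono m k j h). Qed.

Lemma sumW m : (m <= k)%N -> \sum_(j < n) W m j = m%:R.
Proof.
move=> h; rewrite /W exchange_big /=.
rewrite (eq_bigr (fun _ => 1)); last first.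
  move=> i _; apply: Hrow; exact: leq_trans (ltn_ord i) h.
by rewrite sumr_const card_ord.
Qed.

Lemma prefix_eq m t : (m <= k)%N ->
  A m - D m = \sum_(j < n) (L j - t) * (W m j - (j < m)%:R).
Proof.
move=> h.
have hmn : (m <= n)%N := leq_trans h hkn.
have -> : \sum_(j < n) (L j - t) * (W m j - (j < m)%:R)
   = \sum_(j < n) L j * W m j - \sum_(j < n) L j * (j < m)%:R
     - t * (\sum_(j < n) W m j - \sum_(j < n) 1 * (j < m)%:R).
  rewrite mulrBr !mulr_sumr -!sumrB; apply: eq_bigr => j _.
  by rewrite mul1r; ring.
rewrite sumW // !sum_ind // (sum_ind (fun=> 1)) // sumr_const card_ord subrr mulr0 subr0.
congr (_ - _); rewrite /A /a /W.
rewrite (eq_bigr (fun j : 'I_n => \sum_(i < m) L j * w i j)); last first.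
  by move=> j _; rewrite mulr_sumr.
by rewrite exchange_big.
Qed.

Definition thr m t := (forall j, (j < m)%N -> t <= L j) /\
                      (forall j, (m <= j)%N -> (j < n)%N -> L j <= t).

Lemma term_le0 m t j : (m <= k)%N -> (j < n)%N -> thr m t ->
  (L j - t) * (W m j - (j < m)%:R) <= 0.
Proof.
move=> h hj [h1 h2]; case: (ltnP j m) => hjm.
  apply: mulr_ge0_le0; first by rewrite subr_ge0 h1.
  by rewrite subr_le0 W_le1.
by apply: mulr_le0_ge0; rewrite ?subr_le0 ?h2 // subr0 W_ge0.
Qed.

Lemma A_le_D_t m t : (m <= k)%N -> thr m t -> A m <= D m.
Proof.
move=> h ht; rewrite -subr_le0 (@prefix_eq m t h).
by apply: sumr_le0 => j _; apply: term_le0.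
Qed.

Lemma thr_ex m : (0 < m)%N -> (m <= n)%N -> thr m (L m.-1).
Proof.
case: m => // m _ hm /=; split.
  by move=> j hj; apply: HLs.
by move=> j hj hjn; apply: HLs => //; exact: ltnW.
Qed.

Lemma A_le_D m : (m <= k)%N -> A m <= D m.
Proof.
case: m => [|m] h; first by rewrite /A /D !big_ord0.
apply: (@A_le_D_t _ _ h); apply: thr_ex => //; exact: leq_trans h hkn.
Qed.

Lemma abel (b : nat -> C) m :
  \sum_(i < m) V i * b i =
  \sum_(i < m) (V i - V i.+1) * (\sum_(l < i.+1) b l) + V m * \sum_(l < m) b l.
Proof.
elim: m => [|m IH]; first by rewrite !big_ord0 mulr0 addr0.
rewrite !big_ord_recr /= IH.
set s := \sum_(i < m) _; set u := \sum_(i < m) b i; ring.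
Qed.

Lemma core_le : \sum_(i < k) V i * a i <= \sum_(i < k) V i * L i.
Proof.
rewrite !abel HVk !mul0r !addr0; apply: ler_sum => i _.
apply: ler_wpM2l; first by rewrite subr_ge0 ltW // HV.
exact: A_le_D.
Qed.

Lemma core_eqA : \sum_(i < k) V i * a i = \sum_(i < k) V i * L i ->
  forall m, (m <= k)%N -> A m = D m.
Proof.
rewrite !abel HVk !mul0r !addr0 => /eqP; rewrite eq_sym -subr_eq0 -sumrB => /eqP H.
have Hnn : forall i : 'I_k, true ->
   0 <= (V i - V i.+1) * \sum_(l < i.+1) L l - (V i - V i.+1) * \sum_(l < i.+1) a l.
  move=> i _; rewrite -mulrBr; apply: mulr_ge0.
    by rewrite subr_ge0 ltW // HV.
  by rewrite subr_ge0 A_le_D.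
have H' := @psumr_eq0P _ _ _ _ Hnn H.
case=> [|m] hm; first by rewrite /A /D !big_ord0.
have := H' (Ordinal hm) isT; rewrite -mulrBr => /eqP; rewrite mulf_eq0.
case/orP => /eqP.
  by move/eqP; rewrite subr_eq0 => /eqP E; have := HV hm; rewrite E ltxx.
by move/eqP; rewrite subr_eq0 eq_sym => /eqP.
Qed.

Lemma term_eq0 m t j : (m <= k)%N -> (j < n)%N -> thr m t -> A m = D m ->
  (L j - t) * (W m j - (j < m)%:R) = 0.
Proof.
move=> h hj ht E.
have Z : \sum_(j < n) - ((L j - t) * (W m j - (j < m)%:R)) = 0.
  by rewrite sumrN -prefix_eq // E subrr oppr0.
have Hnn : forall i : 'I_n, true -> 0 <= - ((L i - t) * (W m i - (i < m)%:R)).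
  by move=> i _; rewrite oppr_ge0 term_le0.
have := @psumr_eq0P _ _ _ _ Hnn Z (Ordinal hj) isT.
by move=> /eqP; rewrite oppr_eq0 => /eqP.
Qed.

Lemma core_eq : \sum_(i < k) V i * a i = \sum_(i < k) V i * L i ->
  forall i j, (i < k)%N -> (j < n)%N -> w i j = 0 \/ L j = L i.
Proof.
move=> E i j hi hj; have hin : (i < n)%N := leq_trans hi hkn.
have EA := core_eqA E.
have WS : W i.+1 j = W i j + w i j by rewrite /W big_ord_recr.
case: (real_ltgtP (HLr hj) (HLr hin)) => [hlt|hlt|->]; [left|left|by right].
-
  have hij : (i < j)%N.
    by rewrite ltnNge; apply/negP => hji; have := HLs hji hin; move=> /(lt_le_trans hlt); rewrite ltxx.
  have ht : thr i.+1 (L i).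
    split; first by move=> j' hj'; apply: (HLs _ hin); rewrite -ltnS.
    by move=> j' hj' hj'n; exact: HLs (ltnW hj') hj'n.
  have := @term_eq0 i.+1 (L i) j hi hj ht (EA _ hi).
  rewrite ltnS leqNgt hij /= subr0 => /eqP; rewrite mulf_eq0 subr_eq0 (lt_eqF hlt) /=.
  rewrite WS => /eqP Z; apply/le_anti; rewrite Hw0 andbT.
  by rewrite -Z lerDr W_ge0.
- have hji : (j < i)%N.
    by rewrite ltnNge; apply/negP => hij; have := HLs hij hj; move=> /(lt_le_trans hlt); rewrite ltxx.
  have ht : thr i (L i).
    split; first by move=> j' hj'; exact: HLs (ltnW hj') hin.
    by move=> j' hj' hj'n; exact: HLs hj' hj'n.
  have := @term_eq0 i (L i) j (ltnW hi) hj ht (EA _ (ltnW hi)).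
  rewrite hji /= => /eqP; rewrite mulf_eq0 subr_eq0 (gt_eqF hlt) /= subr_eq0 => /eqP W1.
  apply/le_anti; rewrite Hw0 andbT.
  have := @W_le1 i.+1 j hi hj; rewrite WS W1 -lerBrDl subrr //.
Qed.

End Core.

Section Q.
Variable C : numClosedFieldType.

Lemma tCM m p q (A : 'M[C]_(m,p)) (B : 'M[C]_(p,q)) : (A *m B)^t* = B^t* *m A^t*.
Proof. by rewrite trmx_mul map_mxM. Qed.

Lemma gramE n (y : 'cV[C]_n) : (y^t* *m y) 0 0 = \sum_j `|y j 0| ^+ 2.
Proof. rewrite mxE; apply: eq_bigr => j _; rewrite !mxE normCK mulrC //. Qed.

Lemma gram_ge0 n (y : 'cV[C]_n) : 0 <= (y^t* *m y) 0 0.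
Proof. by rewrite gramE; apply: sumr_ge0 => j _; rewrite exprn_ge0. Qed.

Lemma psd_gram n p (B : 'M[C]_(p, n)) : psd (B^t* *m B).
Proof.
split; first by rewrite /Defs.hermitian tCM trmxCK.
move=> v; rewrite mulmxA -tCM -mulmxA; exact: gram_ge0.
Qed.

Variables (n k : nat) (x : 'I_k -> 'cV[C]_n) (Hx : orthonormal_tuple x).

Let S := \sum_(i < k) outer (x i).

Lemma outer_mul i j : outer (x i) *m outer (x j) = (i == j)%:R *: outer (x j).
Proof.
rewrite /outer mulmxA -(mulmxA (x i)) Hx mul_mx_scalar -!scalemxAl.
by case: eqP => [->|_]; rewrite ?scale0r.
Qed.

Lemma S_idem : S *m S = S.
Proof.
rewrite /S mulmx_suml; apply: eq_bigr => i _; rewrite mulmx_sumr (bigD1 i) //=.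
rewrite big1 ?addr0; first by rewrite outer_mul eqxx scale1r.
by move=> j /negbTE hj; rewrite outer_mul eq_sym hj scale0r.
Qed.

Lemma outer_herm (y : 'cV[C]_n) : (outer y)^t* = outer y.
Proof. by rewrite /outer tCM trmxCK. Qed.

Lemma S_herm : S^t* = S.
Proof.
rewrite /S raddf_sum /= raddf_sum /=; apply: eq_bigr => i _.
exact: outer_herm.
Qed.

Lemma Q_gram : 1%:M - S = (1%:M - S)^t* *m (1%:M - S).
Proof.
have E : (1%:M - S)^t* = 1%:M - S.
  by rewrite linearB /= map_mxB /= trmx1 map_mx1 S_herm.
rewrite E.
rewrite mulmxBl !mulmxBr !mul1mx !mulmx1 S_idem.
by rewrite subrr subr0.
Qed.

Lemma psd_Q : psd (1%:M - S).
Proof. rewrite Q_gram; exact: psd_gram. Qed.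

Lemma psd_outer (y : 'cV[C]_n) : psd (outer y).
Proof. by rewrite /outer -{1}(trmxCK y); exact: psd_gram. Qed.

Lemma unlift_widen (i : 'I_k) : unlift ord_max (widen_ord (leqnSn k) i) = Some i.
Proof.
have -> : widen_ord (leqnSn k) i = lift ord_max i.
  by apply: val_inj; rewrite /= /bump leqNgt ltn_ord.
exact: liftK.
Qed.

Lemma meas : is_measurement (topk_mu x).
Proof.
split.
  by move=> y; rewrite /topk_mu; case: unlift => [j|]; [exact: psd_outer|exact: psd_Q].
rewrite big_ord_recr /= /topk_mu unlift_none.
rewrite (eq_bigr (fun i => outer (x i))); last by move=> i _; rewrite unlift_widen.
by rewrite addrC subrK.
Qed.

End Q.

Section S.
Variable C : numClosedFieldType.
Variables (n : nat) (rho : 'M[C]_n) (Hh : rho^t* = rho).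

Let P := spectralmx rho.
Let d := spectral_diag rho.
Local Notation e m := (delta_mx m (0 : 'I_1) : 'cV[C]_n).

Lemma rho_herm : rho \is hermsymmx.
Proof. by apply/is_hermitianmxP; rewrite expr0 scale1r Hh. Qed.

Lemma PPt : P *m P^t* = 1%:M.
Proof. apply/unitarymxP; exact: spectral_unitarymx. Qed.

Lemma PtP : P^t* *m P = 1%:M.
Proof. exact: mulmx1C PPt. Qed.

Lemma rhoE : rho = P^t* *m diag_mx d *m P.
Proof.
have /orthomx_spectralP E := hermitian_normalmx rho_herm.
by rewrite {1}E invmx_unitary // spectral_unitarymx.
Qed.

Lemma d_real j : d 0 j \is Num.real.
Proof. by have /mxOverP := hermitian_spectral_diag_real rho_herm; apply. Qed.

Lemma quadE (x : 'cV[C]_n) :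
  (x^t* *m rho *m x) 0 0 = \sum_j d 0 j * `|(P *m x) j 0| ^+ 2.
Proof.
have -> : x^t* *m rho *m x = (P *m x)^t* *m (diag_mx d *m (P *m x)).
  by rewrite rhoE tCM !mulmxA.
move: (P *m x) => y; rewrite mxE; apply: eq_bigr => j _.
rewrite mul_diag_mx !mxE normCK; ring.
Qed.

Lemma normE (x : 'cV[C]_n) :
  (x^t* *m x) 0 0 = \sum_j `|(P *m x) j 0| ^+ 2.
Proof.
have -> : x^t* *m x = (P *m x)^t* *m (P *m x).
  by rewrite tCM mulmxA -(mulmxA _ _ P) PtP mulmx1.
exact: gramE.
Qed.

Lemma diag_eig (y : 'cV[C]_n) c : (forall j, y j 0 = 0 \/ d 0 j = c) ->
  diag_mx d *m y = c *: y.
Proof.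
move=> H; apply/matrixP => j l; rewrite mul_diag_mx !mxE (ord1 l).
by case: (H j) => ->; rewrite ?mulr0.
Qed.

Lemma eig_of (x : 'cV[C]_n) c : (forall j, (P *m x) j 0 = 0 \/ d 0 j = c) ->
  rho *m x = c *: x.
Proof.
move=> H; rewrite rhoE -!mulmxA (@diag_eig _ _ H) -scalemxAr mulmxA PtP mul1mx //.
Qed.

Lemma eig_vec (m : 'I_n) :
  rho *m (P^t* *m e m) = d 0 m *: (P^t* *m e m).
Proof.
have -> : rho *m (P^t* *m e m) = P^t* *m (diag_mx d *m e m).
  by rewrite rhoE !mulmxA -(mulmxA _ P) PPt mulmx1.
rewrite (@diag_eig _ (d 0 m)) -?scalemxAr //.
move=> j; rewrite mxE; case: eqP => [->|_]; [by right|by left].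
Qed.

Lemma eig_orth (a b : 'I_n) :
  (P^t* *m e a)^t* *m (P^t* *m e b) = (a == b)%:R%:M.
Proof.
rewrite tCM trmxCK mulmxA -(mulmxA _ P) PPt mulmx1.
apply/matrixP => i j; rewrite (ord1 i) (ord1 j) !mxE.
rewrite (bigD1 a) //= big1; last first.
  by move=> l /negbTE hl; rewrite !mxE hl /= conjC0 mul0r.
by rewrite addr0 mulr1n !mxE !eqxx !andbT /= rmorph1 mul1r.
Qed.

End S.
Set Implicit Arguments. Unset Strict Implicit.

Section Perm.
Variables (N : nat) (Is : seq nat) (HIs : perm_eq Is (iota 0 N)).

Lemma Is_size : size Is = N.
Proof. by rewrite (perm_size HIs) size_iota. Qed.

Lemma Is_lt j : (j < N)%N -> (nth 0%N Is j < N)%N.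
Proof.
move=> hj; have : nth 0%N Is j \in iota 0 N.
  by rewrite -(perm_mem HIs) mem_nth // Is_size.
by rewrite mem_iota.
Qed.

Lemma Is_inj i j : (i < N)%N -> (j < N)%N -> nth 0%N Is i = nth 0%N Is j -> i = j.
Proof.
move=> hi hj /eqP; rewrite nth_uniq ?Is_size //; first by move/eqP.
by rewrite (perm_uniq HIs) iota_uniq.
Qed.

Lemma Is_surj m : (m < N)%N -> exists2 j, (j < N)%N & nth 0%N Is j = m.
Proof.
move=> hm; have mI : m \in Is by rewrite (perm_mem HIs) mem_iota.
by exists (index m Is); rewrite ?nth_index // -Is_size index_mem.
Qed.

Lemma reindex_Is (R : nmodType) (F : nat -> R) :
  \sum_(m < N) F m = \sum_(j < N) F (nth 0%N Is j).
Proof.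
rewrite -(big_mkord xpredT F) /index_iota subn0 -(perm_big _ HIs) /=.
by rewrite (big_nth 0%N) Is_size big_mkord.
Qed.
End Perm.

Section Sort.
Variable C : numClosedFieldType.
Variables (n : nat) (rho : 'M[C]_n.+1) (Hd : forall j, spectral_diag rho 0 j \is Num.real).

Local Notation s := [seq spectral_diag rho 0 j | j : 'I_n.+1].

Lemma s_size : size s = n.+1.
Proof. by rewrite size_map size_enum_ord. Qed.

Lemma s_nth m : (m < n.+1)%N -> nth 0 s m = spectral_diag rho 0 (inord m).
Proof.
move=> hm; rewrite (nth_map ord0) ?size_enum_ord //; congr (spectral_diag rho 0 _).
by apply: val_inj; rewrite /= nth_enum_ord // inordK.
Qed.

Lemma lam_perm : exists2 Is : seq nat, perm_eq Is (iota 0 n.+1) &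
  forall j, (j < n.+1)%N -> lambda_ j rho = spectral_diag rho 0 (inord (nth 0%N Is j)).
Proof.
have : perm_eq (eigs_sorted rho) s by rewrite /eigs_sorted perm_sort.
case/(perm_iotaP 0) => Is HIs E; rewrite s_size in HIs.
exists Is => // j hj; rewrite /lambda_ E (nth_map 0%N) ?(Is_size HIs) // (s_nth (Is_lt HIs hj)).
by [].
Qed.

Lemma s_real : all (fun x => x \is Num.real) s.
Proof. by apply/allP => x /mapP [j _ ->]. Qed.

Lemma lam_sorted_seq : sorted (fun a b => b <= a) (eigs_sorted rho).
Proof.
apply: (sort_sorted_in (P := fun x => x \is Num.real)); last exact: s_real.
by move=> a b ha hb; rewrite /= orbC real_leVge.
Qed.

Lemma eigs_size : size (eigs_sorted rho) = n.+1.
Proof. by rewrite size_sort s_size. Qed.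

Lemma lam_sorted j1 j2 : (j1 <= j2)%N -> (j2 < n.+1)%N -> lambda_ j2 rho <= lambda_ j1 rho.
Proof.
move=> h12 h2; rewrite /lambda_.
have tr : transitive (fun a b : C => b <= a).
  by move=> b a c hab hbc; exact: le_trans hbc hab.
have rf : reflexive (fun a b : C => b <= a) by move=> a /=; rewrite lexx.
have := sorted_leq_nth tr rf 0 lam_sorted_seq; apply => //.
- by rewrite inE eigs_size (leq_ltn_trans h12).
- by rewrite inE eigs_size.
Qed.

Lemma lam_real j : (j < n.+1)%N -> lambda_ j rho \is Num.real.
Proof.
move=> hj; have [Is HIs E] := lam_perm; rewrite E //.
Qed.
End Sort.

Unset Implicit Arguments. Set Strict Implicit.

Lemma entry11 (C : numClosedFieldType) (A B : 'M[C]_1) : (A *m B) 0 0 = A 0 0 * B 0 0.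
Proof. by rewrite mxE big_ord1. Qed.

Lemma conj11 (C : numClosedFieldType) (A : 'M[C]_1) : (A^t*) 0 0 = (A 0 0)^*.
Proof. by rewrite !mxE. Qed.

Lemma bessel (C : numClosedFieldType) n k (x : 'I_k -> 'cV[C]_n) (Hx : orthonormal_tuple x)
  (z : 'cV[C]_n) : \sum_(i < k) `|(z^t* *m x i) 0 0| ^+ 2 <= (z^t* *m z) 0 0.
Proof.
have [_ /(_ z)] := @psd_Q _ _ _ _ Hx.
rewrite mulmxBr mulmx1 mulmxBl mulmx_sumr mulmx_suml.
have -> : (z ^t* *m z - \sum_(i < k) z ^t* *m outer (x i) *m z) 0 0 =
   (z ^t* *m z) 0 0 - \sum_(i < k) (z ^t* *m outer (x i) *m z) 0 0.
  by rewrite !mxE summxE.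
rewrite subr_ge0; congr (_ <= _); apply: eq_bigr => i _.
rewrite /outer !mulmxA -mulmxA entry11 normCK; congr (_ * _).
by rewrite -conj11 tCM trmxCK.
Qed.

Lemma hs_outer (C : numClosedFieldType) n (y : 'cV[C]_n) (rho : 'M[C]_n) :
  hs_dot (outer y) rho = (y^t* *m rho *m y) 0 0.
Proof.
by rewrite /hs_dot outer_herm /outer -mulmxA mxtrace_mulC trace_mx11.
Qed.

Lemma scoreE (C : numClosedFieldType) n k (v : 'I_k.+1 -> C) (hv_last : v ord_max = 0)
  (x : 'I_k -> 'cV[C]_n) (rho : 'M[C]_n) :
  exp_score (topk_score n v) x rho =
  \sum_(i < k) v (widen_ord (leqnSn k) i) * (x i ^t* *m rho *m x i) 0 0.
Proof.
rewrite /exp_score /= big_ord_recr /= hv_last mulr0 addr0.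
apply: eq_bigr => i _; rewrite /topk_mu unlift_widen hs_outer mulrC //.
Qed.

Lemma delta_row (C : numClosedFieldType) N (m : 'I_N) (A : 'cV[C]_N) :
  ((delta_mx m (0 : 'I_1) : 'cV[C]_N)^t* *m A) 0 0 = A m 0.
Proof.
rewrite mxE (bigD1 m) //= big1 ?addr0.
  by rewrite !mxE !eqxx /= rmorph1 mul1r.
by move=> l /negbTE hl; rewrite !mxE hl /= rmorph0 mul0r.
Qed.

Lemma key (C : numClosedFieldType) (n k : nat) (hkn : (k.+1 <= n.+1)%N)
  (v : 'I_k.+2 -> C)
  (hv_dec : forall i j : 'I_k.+2, (i < j)%N -> v j < v i) (hv_last : v ord_max = 0)
  (rho : 'M[C]_n.+1) (Hh : rho^t* = rho) (x : 'I_k.+1 -> 'cV[C]_n.+1) :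
  is_argmax (@orthonormal_tuple C n.+1 k.+1) (fun r => exp_score (topk_score n.+1 v) r rho) x
  <-> (orthonormal_tuple x /\ forall i : 'I_k.+1, rho *m x i = lambda_ i rho *: x i).
Proof.
pose P := spectralmx rho; pose d := spectral_diag rho.
have [Is HIs HL] := lam_perm rho.
pose L j := lambda_ j rho.
pose V i := v (inord i).
pose w (r : 'I_k.+1 -> 'cV[C]_n.+1) i j :=
  `|(P *m r (inord i)) (inord (nth 0%N Is j)) 0| ^+ 2.
pose f r := exp_score (topk_score n.+1 v) r rho.
have Vw : forall i : 'I_k.+1, V i = v (widen_ord (leqnSn k.+1) i).
  by move=> i; rewrite /V; congr v; apply: val_inj; rewrite /= inordK // ltnS ltnW.
have fE : forall r, f r = \sum_(i < k.+1) V i * \sum_(j < n.+1) L j * w r i j.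
  move=> r; rewrite /f scoreE //; apply: eq_bigr => i _.
  rewrite -Vw; congr (_ * _); rewrite (quadE _ _ _ Hh).
  pose F m := d 0 (inord m) * `|(P *m r (inord i)) (inord m) 0| ^+ 2.
  rewrite (eq_bigr (fun m : 'I_n.+1 => F m)); last by move=> m _; rewrite /F !inord_val.
  rewrite (reindex_Is HIs F); apply: eq_bigr => j _.
  by rewrite /F /L /w HL.
have HV : forall i, (i < k.+1)%N -> V i.+1 < V i.
  move=> i hi; apply: hv_dec; rewrite /= !inordK //; exact: ltnW.
have HVk : V k.+1 = 0.
  by rewrite /V -hv_last; congr v; apply: val_inj; rewrite /= inordK.
have HLr : forall j, (j < n.+1)%N -> L j \is Num.real.
  by move=> j hj; apply: lam_real => //; exact: d_real.
have HLs : forall j1 j2, (j1 <= j2)%N -> (j2 < n.+1)%N -> L j2 <= L j1.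
  by move=> j1 j2 h1 h2; apply: lam_sorted => //; exact: d_real.
have Hw0 : forall r i j, 0 <= w r i j by move=> r i j; rewrite exprn_ge0.
have Hrow : forall r, orthonormal_tuple r -> forall i, (i < k.+1)%N ->
    \sum_(j < n.+1) w r i j = 1.
  move=> r Hr i hi.
  rewrite /w -(reindex_Is HIs (fun m => `|(P *m r (inord i)) (inord m) 0| ^+ 2)).
  rewrite (eq_bigr (fun m : 'I_n.+1 => `|(P *m r (inord i)) m 0| ^+ 2)); last first.
    by move=> m _; rewrite inord_val.
  by rewrite -(normE _ _ rho) Hr eqxx !mxE eqxx.
have Hcol : forall r, orthonormal_tuple r -> forall j, (j < n.+1)%N ->
    \sum_(i < k.+1) w r i j <= 1.
  move=> r Hr j hj; set m : 'I_n.+1 := inord (nth 0%N Is j).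
  pose z := P^t* *m (delta_mx m (0 : 'I_1) : 'cV[C]_n.+1).
  have := @bessel _ _ _ _ Hr z; rewrite (eig_orth _ _ rho m m) eqxx !mxE eqxx /=.
  congr (_ <= _); apply: eq_bigr => i _.
  by rewrite /w inord_val /z tCM trmxCK -mulmxA delta_row.
pose T := \sum_(i < k.+1) V i * L i.
have le_T : forall r, orthonormal_tuple r -> f r <= T.
  move=> r Hr; rewrite fE; apply: (@core_le _ _ _ hkn) => //.
  - by move=> i hi; apply: Hrow.
  - by move=> j hj; apply: Hcol.
have gam_T : forall r, orthonormal_tuple r ->
    (forall i : 'I_k.+1, rho *m r i = lambda_ i rho *: r i) -> f r = T.
  move=> r Hr He; rewrite /f scoreE //; apply: eq_bigr => i _.
  rewrite Vw; congr (_ * _).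
  by rewrite -mulmxA He -scalemxAr mxE Hr eqxx !mxE eqxx mulr1.
have [y Hy He] : exists2 y, orthonormal_tuple y &
    forall i : 'I_k.+1, rho *m y i = lambda_ i rho *: y i.
  pose y (i : 'I_k.+1) := P^t* *m
     (delta_mx (inord (nth 0%N Is i) : 'I_n.+1) (0 : 'I_1) : 'cV[C]_n.+1).
  have hi : forall i : 'I_k.+1, (i < n.+1)%N.
    by move=> i; exact: leq_trans (ltn_ord i) hkn.
  exists y.
    move=> i j; rewrite /y (eig_orth _ _ rho); congr ((_ : bool)%:R%:M).
    apply/eqP/eqP => [E|->] //; apply: val_inj.
    have := congr1 val E; rewrite /= !inordK; try exact: (Is_lt HIs).
    by apply: (Is_inj HIs).
  by move=> i; rewrite /y (eig_vec _ _ _ Hh) // HL.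
split.
  move=> [Hx Hmax].
  have fx : f x = T.
    apply/le_anti; rewrite le_T //=; rewrite -(gam_T y) //; exact: Hmax.
  have Eq := @core_eq _ _ _ hkn _ _ _ HV HVk HLr HLs (Hw0 x) (Hrow x Hx) (Hcol x Hx).
  split => // i; apply: (eig_of _ _ _ Hh) => m.
  have [j hj Ej] := Is_surj HIs (ltn_ord m).
  have [W0|LE] := Eq (etrans (esym (fE x)) fx) i j (ltn_ord i) hj.
    left; move: W0; rewrite /w Ej !inord_val => /eqP.
    by rewrite expf_eq0 /= normr_eq0 => /eqP.
  by right; rewrite -[RHS]/(L i) -LE /L HL // Ej inord_val.
move=> [Hx Hex]; split => // r Hr.
by have := le_T r Hr; rewrite -(gam_T x Hx Hex).
Qed.

Local Close Scope sesquilinear_scope.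

Lemma hs_sum (C : numClosedFieldType) n k (c : 'I_k -> C) (A : 'I_k -> 'M[C]_n) (R : 'M[C]_n) :
  hs_dot (\sum_i c i *: A i) R = \sum_i (c i)^* * hs_dot (A i) R.
Proof.
rewrite /hs_dot raddf_sum /= raddf_sum /= mulmx_suml raddf_sum /=; apply: eq_bigr => i _.
by rewrite linearZ /= map_mxZ /= -scalemxAl linearZ.
Qed.

Theorem mainTheorem12 (C : numClosedFieldType) (n k : nat)
  (hk1 : (1 <= k)%N) (hkn : (k <= n)%N)
  (v : 'I_k.+1 -> C)
  (hv_dec : forall i j : 'I_k.+1, (i < j)%N -> v j < v i)
  (hv_last : v ord_max = 0) :
  (forall x : 'I_k -> 'cV[C]_n, orthonormal_tuple x -> is_measurement (topk_mu x))
  /\ (forall rho : 'M[C]_n, density rho ->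
        forall x : 'I_k -> 'cV[C]_n, orthonormal_tuple x ->
          exp_score (topk_score n v) x rho
          = hs_dot (\sum_(i < k) v (widen_ord (leqnSn k) i) *: outer (x i)) rho)
  /\ (forall rho : 'M[C]_n, density rho ->
        forall x : 'I_k -> 'cV[C]_n,
          is_argmax (@orthonormal_tuple C n k) (fun r => exp_score (topk_score n v) r rho) x
          <-> (orthonormal_tuple x /\ forall i : 'I_k, rho *m x i = lambda_ i rho *: x i))
  /\ elicits (@orthonormal_tuple C n k) (topk_score n v) (@Gamma_top C n k).
Proof.
have hvpos : forall i : 'I_k, 0 < v (widen_ord (leqnSn k) i).
  by move=> i; rewrite -hv_last; apply: hv_dec => /=; exact: ltn_ord.
split; first by move=> x Hx; exact: meas.
have H3 : forall rho : 'M[C]_n, density rho ->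
        forall x : 'I_k -> 'cV[C]_n,
          is_argmax (@orthonormal_tuple C n k) (fun r => exp_score (topk_score n v) r rho) x
          <-> (orthonormal_tuple x /\ forall i : 'I_k, rho *m x i = lambda_ i rho *: x i).
  move=> rho [[Hh _] _] x.
  clear hvpos; move: hv_dec hv_last rho Hh x; case: k hk1 hkn v => [//|k] _ hkn' v.
  case: n hkn' => [//|n] hkn' hv_dec' hv_last' rho Hh x.
  exact: key.
split.
  move=> rho _ x Hx; rewrite scoreE // hs_sum; apply: eq_bigr => i _.
  by rewrite conj_Creal ?gtr0_real // hs_outer.
split; first exact: H3.
by move=> rho Hd r; exact: iff_sym (H3 rho Hd r).
Qed.
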